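(* Let $\mathcal{B}$ be a nontrivial boolean algebra and let $Y\subseteq \mathcal{B}^n$ be an algebraic set over $\mathcal{B}$. Then $Y$ is irreducible over $\mathcal{B}$ if and only if the coordinate algebra $\Gamma_{\mathcal{B}}(Y)$ embeds into $\mathcal{B}$.
   Context: Boolean algebras are considered as structures in the language $\{\vee,\cdot,\bar{\ },0,1\}$ (join, meet, complement, constants). A boolean equation in variables $X=\{x_1,\dots,x_n\}$ is an expression $t(X)=s(X)$ with $t,s$ terms of this language; a system is any set of such equations, and $V_{\mathcal{B}}(S)\subseteq\mathcal{B}^n$ denotes its solution set. A set $Y\subseteq\mathcal{B}^n$ is algebraic if $Y=V_{\mathcal{B}}(S)$ for some system $S$. A nonempty algebraic set is irreducible if it is not a finite union of proper algebraic subsets. For an algebraic set $Y$, define $t\sim_Y s$ on terms in $X$ iff $t(P)=s(P)$ for every $P\in Y$; the set of equivalence classes, with the induced operations, is the coordinate algebra $\Gamma_{\mathcal{B}}(Y)$ (it is a finite boolean algebra generated by the classes of $x_1,\dots,x_n$). *)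

(* Defs.v *)
(* Boolean algebras = mathcomp's ctbDistrLatticeType
   (complemented distributive lattices with top and bottom). *)
From HB Require Import structures.
From mathcomp Require Import all_boot all_order.
Set Implicit Arguments. Unset Strict Implicit. Unset Printing Implicit Defensive.
Import Order.Theory.
Local Open Scope order_scope.

Inductive bterm (n : nat) : Type :=
| BVar  of 'I_n
| BJoin of bterm n & bterm n
| BMeet of bterm n & bterm n
| BCompl of bterm n
| BZero
| BOne.
Arguments BZero {n}.
Arguments BOne {n}.

Section Eval.
Variables (d : Order.disp_t) (B : ctbDistrLatticeType d) (n : nat).

Fixpoint beval (t : bterm n) (P : 'I_n -> B) : B :=
  match t with
  | BVar i => P i
  | BJoin t1 t2 => beval t1 P `|` beval t2 P
  | BMeet t1 t2 => beval t1 P `&` beval t2 P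
  | BCompl t1 => ~` beval t1 P
  | BZero => \bot
  | BOne => \top
  end.

Definition bequation := (bterm n * bterm n)%type.

Definition V_B (S : bequation -> Prop) : ('I_n -> B) -> Prop :=
  fun P => forall e, S e -> beval e.1 P = beval e.2 P.

Definition algebraic (Y : ('I_n -> B) -> Prop) : Prop :=
  exists S : bequation -> Prop, forall P, Y P <-> V_B S P.

Definition irreducible (Y : ('I_n -> B) -> Prop) : Prop :=
  algebraic Y /\ (exists P, Y P) /\
  ~ (exists (k : nat) (Z : 'I_k -> ('I_n -> B) -> Prop),
        (forall i, algebraic (Z i)) /\
        (forall i, (forall P, Z i P -> Y P) /\ (exists P, Y P /\ ~ Z i P)) /\
        (forall P, Y P <-> exists i, Z i P)).

Definition coord_equiv (Y : ('I_n -> B) -> Prop) (t s : bterm n) : Prop :=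
  forall P, Y P -> beval t P = beval s P.

(* The coordinate algebra Gamma_B(Y) is the term algebra modulo ~_Y.
   An embedding Gamma_B(Y) -> B is (by the universal property of the quotient)
   the same as a map h on terms which preserves join, meet, complement, 0, 1
   and whose kernel is exactly ~_Y (compatibility + injectivity on classes). *)
Definition coord_embeds (Y : ('I_n -> B) -> Prop) : Prop :=
  exists h : bterm n -> B,
    [/\ forall t s, h (BJoin t s) = h t `|` h s,
        forall t s, h (BMeet t s) = h t `&` h s,
        forall t, h (BCompl t) = ~` h t,
        h BZero = \bot /\ h BOne = \top
      & forall t s, h t = h s <-> coord_equiv Y t s].

End Eval.

(* Main.v *)
Require Import Defs.
From HB Require Import structures.
From mathcomp Require Import all_boot all_order.
From Stdlib Require Import Classical ClassicalEpsilon.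
Import Order.Theory.
Local Open Scope order_scope.

Set Implicit Arguments. Unset Strict Implicit.

Definition lit n (s : {ffun 'I_n -> bool}) (i : 'I_n) : bterm n :=
  if s i then BVar i else BCompl (BVar i).

Definition mintl n (s : {ffun 'I_n -> bool}) (l : seq 'I_n) : bterm n :=
  foldr (fun i acc => BMeet (lit s i) acc) BOne l.

Definition mint n (s : {ffun 'I_n -> bool}) : bterm n := mintl s (enum 'I_n).

Fixpoint beb n (u : bterm n) (s : {ffun 'I_n -> bool}) : bool :=
  match u with
  | BVar i => s i
  | BJoin a b => beb a s || beb b s
  | BMeet a b => beb a s && beb b s
  | BCompl a => ~~ beb a s
  | BZero => false
  | BOne => true
  end.

Lemma mintl_le d (B : ctbDistrLatticeType d) n (s : {ffun 'I_n -> bool})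
  (Q : 'I_n -> B) l i : i \in l -> beval (mintl s l) Q <= beval (lit s i) Q.
Proof.
elim: l => // j l IH; rewrite inE => /orP [/eqP ->|Hi] /=; first exact: leIl.
exact: leIxr (IH Hi).
Qed.

Lemma mint_le d (B : ctbDistrLatticeType d) n (s : {ffun 'I_n -> bool})
  (Q : 'I_n -> B) i : beval (mint s) Q <= beval (lit s i) Q.
Proof. by apply: mintl_le; rewrite mem_enum. Qed.

Lemma key d (B : ctbDistrLatticeType d) n (s : {ffun 'I_n -> bool})
  (Q : 'I_n -> B) (m : B) (Hm : forall i, m <= beval (lit s i) Q) u :
  m `&` beval u Q = if beb u s then m else \bot.
Proof.
elim: u => [i|a IHa b IHb|a IHa b IHb|a IHa||] /=.
- have := Hm i; rewrite /lit; case: (s i) => /= H; first exact/meet_idPl.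
  by rewrite -(meet_idPl H) -meetA meetCx meetx0.
- by rewrite meetUr IHa IHb; case: (beb a s); case: (beb b s);
    rewrite ?joinxx ?joinx0 ?join0x.
- by rewrite meetA IHa; case: (beb a s) => //; rewrite meet0x.
- move: IHa; case: (beb a s) => /= IH.
  + by rewrite -IH -meetA meetxC meetx0.
  + have E : m = m `&` (beval a Q `|` ~` beval a Q) by rewrite joinxC meetx1.
    by rewrite [RHS]E meetUr IH join0x.
- exact: meetx0.
- exact: meetx1.
Qed.

Lemma mintl_mono d (B : ctbDistrLatticeType d) n (s s' : {ffun 'I_n -> bool})
  (Q : 'I_n -> B) (x : B)
  (H : forall j, x `&` beval (lit s j) Q <= beval (lit s' j) Q) l :
  beval (mintl s l) Q `&` x <= beval (mintl s' l) Q.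
Proof.
elim: l => [|j l IH] /=; first exact: lex1.
rewrite lexI; apply/andP; split.
- apply: le_trans (H j); rewrite lexI leIr /=; exact: leIxl (leIl _ _).
- apply: le_trans IH; apply: leI2 (lexx _); exact: leIr.
Qed.

Lemma le_bot_eq d (B : ctbDistrLatticeType d) (x y : B) :
  x <= y -> y = \bot -> x = \bot.
Proof. by move=> H Hy; apply/eqP; rewrite -lex0 -Hy. Qed.

Lemma aux d (B : ctbDistrLatticeType d) (x c a y : B) :
  x `&` c <= y -> x `&` (c `&` a) <= c `&` y `&` a.
Proof.
move=> Hle.
rewrite lexI; apply/andP; split; last exact: leIxr (leIr _ _).
rewrite lexI; apply/andP; split; first exact: leIxr (leIl _ _).
apply: le_trans Hle; exact: leI2 (lexx _) (leIl _ _).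
Qed.

Lemma cover d (B : ctbDistrLatticeType d) n (Q : 'I_n -> B) l (a : B) :
  (forall s : {ffun 'I_n -> bool}, beval (mintl s l) Q `&` a = \bot) -> a = \bot.
Proof.
elim: l a => [|i l IH] a H.
  by have := H [ffun=> true]; rewrite /= meet1x.
have step : forall b : bool, (if b then Q i else ~` Q i) `&` a = \bot.
  move=> b; apply: IH => s.
  pose s1 := [ffun j => if j == i then b else s j].
  have E1 : beval (lit s1 i) Q = if b then Q i else ~` Q i.
    by rewrite /lit ffunE eqxx; case: (b).
  have := H s1; rewrite /= E1 => H1.
  apply: (le_bot_eq _ H1).
  have Hle : beval (mintl s l) Q `&` (if b then Q i else ~` Q i)
      <= beval (mintl s1 l) Q.
    apply: mintl_mono => j; rewrite /lit ffunE; case: eqP => [->|_].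
    + by rewrite -E1 /lit ffunE eqxx; exact: leIl.
    + exact: leIr.
  exact: aux _ Hle.
have H1 := step true; have H0 := step false; simpl in H1, H0.
transitivity ((Q i `|` ~` Q i) `&` a); first by rewrite joinxC meet1x.
by rewrite meetUl H1 H0 joinx0.
Qed.

Lemma cover_eq d (B : ctbDistrLatticeType d) n (Q : 'I_n -> B) (a b : B) :
  (forall s : {ffun 'I_n -> bool}, beval (mint s) Q `&` a = beval (mint s) Q `&` b) ->
  a = b.
Proof.
move=> H.
have G : forall x y : B, (forall s : {ffun 'I_n -> bool},
   beval (mint s) Q `&` x = beval (mint s) Q `&` y) -> x = x `&` y.
  move=> x y Hxy.
  have Z : x `&` ~` y = \bot.
    apply: (@cover _ _ _ Q (enum 'I_n)) => s.
    by rewrite meetA -/(mint s) Hxy -meetA meetxC meetx0.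
  have E : x = x `&` (y `|` ~` y) by rewrite joinxC meetx1.
  by rewrite [LHS]E meetUr Z joinx0.
have Ha := G a b H; have Hb := G b a (fun s => esym (H s)).
by rewrite Ha [RHS]Hb meetC.
Qed.

Theorem theorem1 (d : Order.disp_t) (B : ctbDistrLatticeType d) (n : nat)
  (nontriv : (\bot : B) != \top)
  (Y : ('I_n -> B) -> Prop) (HY : algebraic Y) :
  irreducible Y <-> coord_embeds Y.
Proof.
split.
- move=> [_ [_ Hirr]].
  case: (classic (exists P, Y P /\ forall s : {ffun 'I_n -> bool},
        ~ coord_equiv Y (mint s) BZero -> beval (mint s) P <> \bot))
    => [[P [YP HP]]|Hno].
  + exists (fun t => beval t P); split => // t s; split; last first.
      by move=> Hc; exact: Hc P YP.
    move=> Hts Q YQ.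
    have Hz : forall sg, beb t sg != beb s sg -> beval (mint sg) Q = \bot.
      move=> sg Hne; case: (classic (coord_equiv Y (mint sg) BZero)) => Hc.
        exact: Hc Q YQ.
      exfalso; apply: (HP sg Hc).
      have Kt := key (mint_le sg P) t; have Ks := key (mint_le sg P) s.
      rewrite Hts in Kt; move: Hne; rewrite Kt in Ks.
      by case: (beb t sg) Ks; case: (beb s sg).
    apply: (cover_eq (Q := Q)) => sg.
    rewrite (key (mint_le sg Q) t) (key (mint_le sg Q) s).
    by case Et: (beb t sg); case Es: (beb s sg) => //;
      rewrite Hz ?Et ?Es.
  + exfalso; apply: Hirr.
    pose A : pred {ffun 'I_n -> bool} := fun sg =>
      if excluded_middle_informative (~ coord_equiv Y (mint sg) BZero)
      then true else false.
    have HA : forall x, x \in A -> ~ coord_equiv Y (mint x) BZero.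
      move=> x; rewrite unfold_in /A.
      by case: excluded_middle_informative.
    have HA' : forall x, ~ coord_equiv Y (mint x) BZero -> x \in A.
      move=> x Hs; rewrite unfold_in /A.
      by case: excluded_middle_informative.
    exists #|A|, (fun i P => Y P /\ beval (mint (enum_val i)) P = \bot).
    split; [|split].
    * move=> i; case: HY => S HS.
      exists (fun e => S e \/ e = (mint (enum_val i), BZero)) => P; split.
      - move=> [YP Hm] e [Se|->]; first exact: (proj1 (HS P) YP).
        exact: Hm.
      - move=> HV; split; last exact: (HV _ (or_intror erefl)).
        by apply/HS => e Se; apply: HV; left.
    * move=> i; split; first by move=> P [].
      have Hi := HA _ (enum_valP i).
      apply: NNPP => Hn; apply: Hi => Q YQ; apply: NNPP => HQ; apply: Hn.
      by exists Q; split => // [[_ HQ']]; apply: HQ.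
    * move=> P; split; last by case=> i [].
      move=> YP; apply: NNPP => Hn; apply: Hno; exists P; split => //.
      move=> sg Hsg Hm; apply: Hn.
      have Hin := HA' _ Hsg.
      exists (enum_rank_in Hin sg); rewrite enum_rankK_in //.
- move=> [h [hJ hM hC [h0 h1] hK]].
  pose Ph := fun i => h (BVar i).
  have Hev : forall t, beval t Ph = h t.
    elim=> [i|a IHa b IHb|a IHa b IHb|a IHa||] //=.
    + by rewrite hJ IHa IHb.
    + by rewrite hM IHa IHb.
    + by rewrite hC IHa.
  have YPh : Y Ph.
    case: (HY) => S HS; apply/HS => e Se; rewrite !Hev; apply/hK => Q YQ.
    exact: (proj1 (HS Q) YQ e Se).
  have gen : forall Z, algebraic Z -> Z Ph -> forall Q, Y Q -> Z Q.
    move=> Z [S' HS'] ZPh Q YQ; apply/HS' => e Se.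
    have := proj1 (HS' Ph) ZPh e Se; rewrite !Hev => /hK; exact.
  split; first exact: HY.
  split; first by exists Ph.
  move=> [k [Z [Zalg [Zprop Zcov]]]].
  have [i Zi] := proj1 (Zcov Ph) YPh.
  have [_ [Q [YQ nZQ]]] := Zprop i.
  by apply: nZQ; exact: gen (Zalg i) Zi Q YQ.
Qed.
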